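(* Let $q\in\,]0,1[$, $\omega\ge0$, let $I$ be an interval containing $\omega_0:=\omega/(1-q)$, $a,b\in I$ with $a<b$, $\alpha,\beta\in\mathbb{R}$, and let $L,\bar L:I\times\mathbb{R}\times\mathbb{R}\to\mathbb{R}$ both satisfy: for every $t$, $(u,v)\mapsto L(t,u,v)$ is $C^1$; $t\mapsto L(t,y(\sigma(t)),\tilde D_{q,\omega}[y](t))$ is continuous at $\omega_0$ for every admissible $y$; and $t\mapsto\partial_iL(t,y(\sigma(t)),\tilde D_{q,\omega}[y](t))$, $i=2,3$, belong to $\mathcal{Y}^1([a,b]_{q,\omega},\mathbb{R})$ for every admissible $y$ (and the same for $\bar L$ with its admissible functions). Let $\mathcal{L}(y):=\int_a^bL(t,y(\sigma(t)),\tilde D_{q,\omega}[y](t))\,\tilde d_{q,\omega}t$ and $\bar{\mathcal{L}}(\bar y):=\int_a^b\bar L(t,\bar y(\sigma(t)),\tilde D_{q,\omega}[\bar y](t))\,\tilde d_{q,\omega}t$. Let $y=z(t,\bar y)$ be a transformation with a unique inverse $\bar y=\bar z(t,y)$ for all $t\in[a,b]_{q,\omega}$, such that there is a one-to-one correspondence $y(t)\leftrightarrow\bar y(t)$ between all functions $y\in\mathcal{Y}^1([a,b]_{q,\omega},\mathbb{R})$ with $y(a)=\alpha$, $y(b)=\beta$ and all functions $\bar y\in\mathcal{Y}^1([a,b]_{q,\omega},\mathbb{R})$ with $$\bar y(a)=\bar z(a,\alpha),\qquad \bar y(b)=\bar z(b,\beta).\qquad( * )$$ Suppose there is a function $G:I\times\mathbb{R}\to\mathbb{R}$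 such that, for corresponding $y$ and $\bar y$, $$L\bigl(t,y(\sigma(t)),\tilde D_{q,\omega}[y](t)\bigr)-\bar L\bigl(t,\bar y(\sigma(t)),\tilde D_{q,\omega}[\bar y](t)\bigr)=\tilde D_{q,\omega}\bigl[\tau\mapsto G(\tau,\bar y(\tau))\bigr](t)\quad\forall t\in[a,b]_{q,\omega}.$$ Then, if $\bar y_*$ is a maximizer (resp. minimizer) of $\bar{\mathcal{L}}$ among functions satisfying $( * )$, the function $y_*=z(t,\bar y_* )$ is a maximizer (resp. minimizer) of $\mathcal{L}$ among functions satisfying $y(a)=\alpha$, $y(b)=\beta$.
   Context: $\sigma(t):=qt+\omega$, $\sigma^{-1}(t):=q^{-1}(t-\omega)$, $\sigma^k$ the $k$-fold composition. Hahn symmetric derivative: for $t\neq\omega_0$, $\tilde D_{q,\omega}[f](t):=\frac{f(\sigma(t))-f(\sigma^{-1}(t))}{\sigma(t)-\sigma^{-1}(t)}$; $\tilde D_{q,\omega}[f](\omega_0):=f'(\omega_0)$ (classical derivative). Hahn symmetric integral: $\int_{\omega_0}^xF\,\tilde d_{q,\omega}t:=(\sigma^{-1}(x)-\sigma(x))\sum_{n\ge0}q^{2n+1}F(\sigma^{2n+1}(x))$, $\int_a^bF\,\tilde d_{q,\omega}t:=\int_{\omega_0}^bF\,\tilde d_{q,\omega}t-\int_{\omega_0}^aF\,\tilde d_{q,\omega}t$. $[s]_{q,\omega}:=\{\sigma^{2n+1}(s):n\in\mathbb{N}_0\}\cup\{\omega_0\}$, $[a,b]_{q,\omega}:=[a]_{q,\omega}\cup[b]_{q,\omega}$.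 $\mathcal{Y}^1([a,b]_{q,\omega},\mathbb{R})$: functions $y:I\to\mathbb{R}$ with $y$ and $\tilde D_{q,\omega}[y]$ bounded on $[a,b]_{q,\omega}$ and continuous at $\omega_0$. Admissible functions for $\mathcal{L}$ are $y\in\mathcal{Y}^1$ with $y(a)=\alpha$, $y(b)=\beta$; for $\bar{\mathcal{L}}$ they are $\bar y\in\mathcal{Y}^1$ satisfying $( * )$. $\partial_jL$ denotes the partial derivative in the $j$-th argument. *)

(* Defs.v *)
From Stdlib Require Import Reals ClassicalEpsilon.
From Coquelicot Require Import Coquelicot.
Open Scope R_scope.

Section Hahn.
Variables (q w : R).

Definition sigma (t : R) : R := q * t + w.
Definition sigma_inv (t : R) : R := (t - w) / q.
Definition sigma_iter (k : nat) (t : R) : R := Nat.iter k sigma t.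
Definition omega0 : R := w / (1 - q).

Definition qw_point_set (s t : R) : Prop :=
  (exists n : nat, t = sigma_iter (2 * n + 1) s) \/ t = omega0.
Definition qw_set (a b t : R) : Prop := qw_point_set a t \/ qw_point_set b t.

(* classical derivative of f : I -> R at x (one-sided if x is an endpoint of I) *)
Definition is_derive_within (I : R -> Prop) (f : R -> R) (x d : R) : Prop :=
  filterlim (fun t => (f t - f x) / (t - x))
    (within (fun t => I t /\ t <> x) (locally x)) (locally d).

Definition derive_within (I : R -> Prop) (f : R -> R) (x : R) : R :=
  epsilon (inhabits 0) (fun d => is_derive_within I f x d).

Definition hahn_quot (f : R -> R) (t : R) : R :=
  (f (sigma t) - f (sigma_inv t)) / (sigma t - sigma_inv t).

Definition hahn_D (I : R -> Prop) (f : R -> R) (t : R) : R :=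
  if Req_EM_T t omega0 then derive_within I f t else hahn_quot f t.

Definition hahn_D_is (I : R -> Prop) (f : R -> R) (t d : R) : Prop :=
  (t <> omega0 -> hahn_quot f t = d) /\
  (t = omega0 -> is_derive_within I f omega0 d).

Definition hahn_int0 (F : R -> R) (x : R) : R :=
  (sigma_inv x - sigma x) *
  Series (fun n : nat => q ^ (2 * n + 1) * F (sigma_iter (2 * n + 1) x)).
Definition hahn_int (F : R -> R) (a b : R) : R := hahn_int0 F b - hahn_int0 F a.

Definition cont_within (I : R -> Prop) (f : R -> R) (x : R) : Prop :=
  filterlim f (within I (locally x)) (locally (f x)).

Definition bounded_on (S : R -> Prop) (f : R -> R) : Prop :=
  exists M : R, forall t, S t -> Rabs (f t) <= M.

Definition Y1 (I : R -> Prop) (a b : R) (y : R -> R) : Prop :=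
  (exists d, is_derive_within I y omega0 d) /\
  bounded_on (qw_set a b) y /\ bounded_on (qw_set a b) (hahn_D I y) /\
  cont_within I y omega0 /\ cont_within I (hahn_D I y) omega0.

Definition lag_comp (I : R -> Prop) (L : R -> R -> R -> R) (y : R -> R) (t : R) : R :=
  L t (y (sigma t)) (hahn_D I y t).

Definition functional (I : R -> Prop) (L : R -> R -> R -> R) (a b : R) (y : R -> R) : R :=
  hahn_int (lag_comp I L y) a b.

End Hahn.

Definition d2 (L : R -> R -> R -> R) (t u v : R) : R := Derive (fun u' => L t u' v) u.
Definition d3 (L : R -> R -> R -> R) (t u v : R) : R := Derive (fun v' => L t u v') v.

Definition C1_uv (f : R -> R -> R) : Prop :=
  forall u v : R,
    ex_derive (fun u' => f u' v) u /\ ex_derive (fun v' => f u v') v /\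
    continuous (fun p : R * R => Derive (fun u' => f u' (snd p)) (fst p)) (u, v) /\
    continuous (fun p : R * R => Derive (fun v' => f (fst p) v') (snd p)) (u, v).

Definition lagrangian_hyp (q w : R) (I : R -> Prop) (a b : R)
    (L : R -> R -> R -> R) (adm : (R -> R) -> Prop) : Prop :=
  (forall t, I t -> C1_uv (L t)) /\
  forall y, adm y ->
    cont_within I (lag_comp q w I L y) (omega0 q w) /\
    Y1 q w I a b (fun t => d2 L t (y (sigma q w t)) (hahn_D q w I y t)) /\
    Y1 q w I a b (fun t => d3 L t (y (sigma q w t)) (hahn_D q w I y t)).

Definition is_interval (I : R -> Prop) : Prop :=
  forall x y z, I x -> I z -> x <= y <= z -> I y.

(* Main.v *)
Require Import Defs.
From Stdlib Require Import Reals Lra Lia Classical FunctionalExtensionality PropExtensionality.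
From Coquelicot Require Import Coquelicot.
Import Defs.
Open Scope R_scope.
Import Defs.

Lemma sig_om q w t : q < 1 -> sigma q w t - omega0 q w = q * (t - omega0 q w).
Proof. intros. unfold sigma, omega0. field. lra. Qed.

Lemma siginv_om q w t : 0 < q < 1 -> sigma_inv q w t - omega0 q w = (t - omega0 q w) / q.
Proof. intros. unfold sigma_inv, omega0. field. lra. Qed.

Lemma iter_om q w k x : q < 1 -> sigma_iter q w k x - omega0 q w = q ^ k * (x - omega0 q w).
Proof.
  intros Hq. induction k as [|k IH]; simpl. ring.
  change (sigma_iter q w (S k) x) with (sigma q w (sigma_iter q w k x)).
  rewrite sig_om; auto. rewrite IH. ring.
Qed.

Lemma iter_S q w k x : sigma_iter q w (S k) x = sigma q w (sigma_iter q w k x).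
Proof. reflexivity. Qed.

Lemma inv_sig q w t : 0 < q -> sigma_inv q w (sigma q w t) = t.
Proof. intros. unfold sigma_inv, sigma. field. lra. Qed.

Lemma sig_om0 q w : q < 1 -> sigma q w (omega0 q w) = omega0 q w.
Proof. intros. unfold sigma, omega0. field. lra. Qed.

Lemma siginv_om0 q w : 0 < q < 1 -> sigma_inv q w (omega0 q w) = omega0 q w.
Proof. intros. unfold sigma_inv, omega0. field. lra. Qed.

Lemma between (I : R -> Prop) u v s : is_interval I -> I u -> I v ->
  (u <= s <= v \/ v <= s <= u) -> I s.
Proof. intros HI Hu Hv [H|H]; [exact (HI u s v Hu Hv H) | exact (HI v s u Hv Hu H)]. Qed.

Lemma iter_I q w (I : R -> Prop) k x : 0 < q < 1 -> is_interval I -> I (omega0 q w) -> I x ->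
  I (sigma_iter q w k x).
Proof.
  intros Hq HI H0 Hx.
  pose proof (iter_om q w k x (proj2 Hq)) as E.
  assert (0 < q ^ k) by (apply pow_lt; lra).
  assert (q ^ k <= 1) by (rewrite <- (pow1 k); apply pow_incr; lra).
  apply (between I x (omega0 q w)); auto.
  destruct (Rle_dec x (omega0 q w)).
  - left. split; nra.
  - right. split; nra.
Qed.

Lemma ball_R (c e t : R) : ball c e t <-> Rabs (t - c) < e.
Proof. reflexivity. Qed.

Lemma lim_iter q w (I : R -> Prop) (F : R -> R) x (m : nat -> nat) :
  0 < q < 1 -> is_interval I -> I (omega0 q w) -> I x ->
  cont_within I F (omega0 q w) -> (forall n, (n <= m n)%nat) ->
  is_lim_seq (fun n => F (sigma_iter q w (m n) x)) (F (omega0 q w)).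
Proof.
  intros Hq HI H0 Hx HF Hm. unfold cont_within in HF.
  apply is_lim_seq_spec. intros eps.
  pose proof (proj1 (filterlim_locally (F := within I (locally (omega0 q w))) F _) HF eps) as HF'.
  clear HF.
  destruct HF' as [d Hd].
  assert (Hq' : Rabs q < 1) by (rewrite Rabs_pos_eq; lra).
  assert (Hp : 0 < d / (Rabs (x - omega0 q w) + 1)).
  { apply Rdiv_lt_0_compat. apply cond_pos. pose proof (Rabs_pos (x - omega0 q w)); lra. }
  destruct (pow_lt_1_zero q Hq' _ Hp) as [N HN].
  exists N. intros n Hn.
  apply (Hd (sigma_iter q w (m n) x)).
  - apply ball_R. rewrite iter_om by lra. rewrite Rabs_mult.
    assert (Hmn : (m n >= N)%nat) by (specialize (Hm n); lia).
    specialize (HN _ Hmn).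
    pose proof (Rabs_pos (x - omega0 q w)).
    pose proof (Rabs_pos (q ^ m n)).
    apply (Rmult_lt_compat_r (Rabs (x - omega0 q w) + 1)) in HN; [|lra].
    unfold Rdiv in HN. rewrite Rmult_assoc, Rinv_l in HN by lra.
    nra.
  - apply iter_I; auto.
Qed.

Lemma ex_series_iter q w (I : R -> Prop) (F : R -> R) x :
  0 < q < 1 -> is_interval I -> I (omega0 q w) -> I x ->
  cont_within I F (omega0 q w) ->
  ex_series (fun n => q ^ (2 * n + 1) * F (sigma_iter q w (2 * n + 1) x)).
Proof.
  intros Hq HI H0 Hx HF.
  pose proof (lim_iter q w I F x (fun n => (2 * n + 1)%nat) Hq HI H0 Hx HF ltac:(intros n; cbv beta; lia)) as L.
  apply is_lim_seq_spec in L.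
  destruct (L (mkposreal 1 Rlt_0_1)) as [N HN]. change (pos (mkposreal 1 Rlt_0_1)) with 1 in HN.
  apply (ex_series_incr_n _ N).
  set (M := Rabs (F (omega0 q w)) + 1).
  apply (ex_series_le (V := R_CompleteNormedModule) _ (fun k => (q ^ (2 * N + 1) * M) * (q ^ 2) ^ k)).
  - intros k. change (norm ?z) with (Rabs z).
    rewrite Rabs_mult. rewrite <- pow_mult.
    replace (2 * (N + k) + 1)%nat with ((2 * N + 1) + 2 * k)%nat by lia.
    rewrite pow_add.
    assert (0 < q ^ (2 * N + 1)) by (apply pow_lt; lra).
    assert (0 < q ^ (2 * k)) by (apply pow_lt; lra).
    rewrite Rabs_pos_eq by (apply Rmult_le_pos; lra).
    specialize (HN (N + k)%nat (Nat.le_add_r N k)).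
    assert (Rabs (F (sigma_iter q w (2 * (N + k) + 1) x)) <= M).
    { unfold M. pose proof (Rabs_triang_inv (F (sigma_iter q w (2 * (N + k) + 1) x)) (F (omega0 q w))). lra. }
    replace (q ^ (2 * N + 1) * M * q ^ (2 * k)) with (q ^ (2 * N + 1) * q ^ (2 * k) * M) by ring.
    apply Rmult_le_compat_l; [nra|]. replace (2 * N + 1 + 2 * k)%nat with (2 * (N + k) + 1)%nat by lia. lra.
  - apply (ex_series_scal (V := R_NormedModule) (q ^ (2 * N + 1) * M)).
    eexists. apply is_series_geom. rewrite Rabs_pos_eq; nra.
Qed.

Lemma telescope (u : nat -> R) (l : R) : is_lim_seq u l ->
  is_series (fun n => u n - u (S n)) (u O - l).
Proof.
  intros Hu.
  assert (E : forall N, sum_n (fun n => u n - u (S n)) N = u O - u (S N)).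
  { induction N. rewrite sum_O. reflexivity.
    rewrite sum_Sn, IHN. unfold plus; simpl. ring. }
  unfold is_series.
  apply (filterlim_ext (fun N => u O - u (S N))). intros; rewrite E; reflexivity.
  apply is_lim_seq_incr_1 in Hu.
  exact (is_lim_seq_minus' (fun _ => u O) _ (u O) l (is_lim_seq_const _) Hu).
Qed.

Lemma deriv_cont (I : R -> Prop) g x d : is_derive_within I g x d -> cont_within I g x.
Proof.
  intros H. unfold cont_within. apply (filterlim_locally (F := within I (locally x))). intros eps.
  unfold is_derive_within in H.
  destruct (proj1 (filterlim_locally (F := within (fun t => I t /\ t <> x) (locally x)) _ _) H (mkposreal 1 Rlt_0_1)) as [d1 Hd1].
  assert (Hp : 0 < eps / (Rabs d + 1)).
  { apply Rdiv_lt_0_compat. apply cond_pos. pose proof (Rabs_pos d); lra. }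
  exists (mkposreal _ (Rmin_pos _ _ (cond_pos d1) Hp)).
  intros t Ht HIt. apply ball_R. change (Rabs (t - x) < Rmin d1 (eps / (Rabs d + 1))) in Ht.
  destruct (Req_dec t x) as [->|Hne].
  - rewrite Rminus_diag, Rabs_R0. apply cond_pos.
  - assert (B : ball x d1 t) by (apply ball_R; pose proof (Rmin_l d1 (eps / (Rabs d + 1))); lra).
    specialize (Hd1 t B (conj HIt Hne)). change (Rabs ((g t - g x) / (t - x) - d) < 1) in Hd1.
    assert (Hq : Rabs ((g t - g x) / (t - x)) <= Rabs d + 1).
    { pose proof (Rabs_triang_inv ((g t - g x) / (t - x)) d). lra. }
    replace (g t - g x) with ((g t - g x) / (t - x) * (t - x)) by (field; lra).
    rewrite Rabs_mult.
    assert (Rabs (t - x) < eps / (Rabs d + 1)) by (pose proof (Rmin_r d1 (eps / (Rabs d + 1))); lra).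
    pose proof (Rabs_pos d). pose proof (Rabs_pos (t - x)).
    pose proof (Rabs_pos ((g t - g x) / (t - x))).
    apply (Rle_lt_trans _ ((Rabs d + 1) * Rabs (t - x))). apply Rmult_le_compat_r; lra.
    apply (Rmult_lt_compat_l (Rabs d + 1)) in H0; [|lra].
    replace ((Rabs d + 1) * (eps / (Rabs d + 1))) with (pos eps) in H0 by (field; lra). exact H0.
Qed.

Lemma key q w (I : R -> Prop) (g F1 F2 : R -> R) x d :
  0 < q < 1 -> is_interval I -> I (omega0 q w) -> I x ->
  cont_within I F1 (omega0 q w) -> cont_within I F2 (omega0 q w) ->
  is_derive_within I g (omega0 q w) d ->
  (forall n, hahn_D_is q w I g (sigma_iter q w (2 * n + 1) x)
      (F1 (sigma_iter q w (2 * n + 1) x) - F2 (sigma_iter q w (2 * n + 1) x))) ->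
  hahn_int0 q w F1 x - hahn_int0 q w F2 x = g x - g (omega0 q w).
Proof.
  intros Hq HI H0 Hx HF1 HF2 Hd HD.
  unfold hahn_int0.
  destruct (Req_dec x (omega0 q w)) as [->|Hne].
  { rewrite sig_om0, siginv_om0 by lra. ring. }
  rewrite <- Rmult_minus_distr_l.
  rewrite <- Series_minus by (apply ex_series_iter with (I := I); auto).
  set (D := x - omega0 q w).
  assert (HD0 : D <> 0) by (unfold D; lra).
  set (c := / ((/ q - q) * D)).
  rewrite (Series_ext _ (fun n => c * (g (sigma_iter q w (2 * n) x) - g (sigma_iter q w (2 * S n) x)))).
  2:{ intros n.
      set (s := sigma_iter q w (2 * n + 1) x).
      assert (Es : s - omega0 q w = q ^ (2 * n + 1) * D) by (unfold s, D; apply iter_om; lra).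
      assert (HP : 0 < q ^ (2 * n + 1)) by (apply pow_lt; lra).
      assert (Hs : s <> omega0 q w) by (intro E; rewrite E in Es; rewrite Rminus_diag in Es;
        symmetry in Es; apply Rmult_integral in Es; destruct Es; lra).
      destruct (HD n) as [Hq1 _]. fold s in Hq1. specialize (Hq1 Hs).
      rewrite <- Rmult_minus_distr_l, <- Hq1.
      unfold hahn_quot.
      assert (E1 : sigma q w s = sigma_iter q w (2 * S n) x).
      { replace (2 * S n)%nat with (S (2 * n + 1)) by lia. reflexivity. }
      assert (E2 : sigma_inv q w s = sigma_iter q w (2 * n) x).
      { unfold s. replace (2 * n + 1)%nat with (S (2 * n)) by lia. rewrite iter_S. apply inv_sig; lra. }
      assert (E3 : sigma q w s - sigma_inv q w s = - (q ^ (2 * n + 1) * D * (/ q - q))).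
      { pose proof (sig_om q w s ltac:(lra)). pose proof (siginv_om q w s Hq).
        replace (sigma q w s - sigma_inv q w s) with
          ((sigma q w s - omega0 q w) - (sigma_inv q w s - omega0 q w)) by ring.
        rewrite H, H1, Es. field. lra. }
      rewrite E3, E1, E2. unfold c. field.
      repeat split; try lra. intro; nra. }
  rewrite Series_scal_l.
  assert (Hc : cont_within I g (omega0 q w)) by (apply deriv_cont with d; auto).
  pose proof (lim_iter q w I g x (fun n => (2 * n)%nat) Hq HI H0 Hx Hc ltac:(intros n; cbv beta; lia)) as Lim.
  pose proof (telescope _ _ Lim) as T. cbv beta in T.
  rewrite (is_series_unique _ _ T).
  replace (sigma_iter q w (2 * 0) x) with x by reflexivity.
  replace (sigma_inv q w x - sigma q w x) with ((/ q - q) * D).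
  2:{ pose proof (sig_om q w x ltac:(lra)). pose proof (siginv_om q w x Hq).
      replace (sigma_inv q w x - sigma q w x) with
          ((sigma_inv q w x - omega0 q w) - (sigma q w x - omega0 q w)) by ring.
      rewrite H, H1. unfold D. field. lra. }
  unfold c. field. repeat split; auto; try lra; intro; nra.
Qed.

Lemma deriv_ext (I : R -> Prop) f g x d : (forall t, I t -> f t = g t) -> I x ->
  is_derive_within I f x d -> is_derive_within I g x d.
Proof.
  intros E Hx H. unfold is_derive_within in *.
  apply (filterlim_within_ext (fun t => I t /\ t <> x) (fun t => (f t - f x) / (t - x))); auto.
  intros t [Ht _]. rewrite (E t Ht), (E x Hx). reflexivity.
Qed.

Lemma derive_within_ext (I : R -> Prop) f g x : (forall t, I t -> f t = g t) -> I x ->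
  derive_within I f x = derive_within I g x.
Proof.
  intros E Hx. unfold derive_within. f_equal.
  apply functional_extensionality. intros d. apply propositional_extensionality.
  split; apply deriv_ext; auto. intros t Ht; symmetry; auto.
Qed.

Lemma hahnD_ext q w (I : R -> Prop) f g t : (forall t, I t -> f t = g t) ->
  I t -> I (sigma q w t) -> I (sigma_inv q w t) -> hahn_D q w I f t = hahn_D q w I g t.
Proof.
  intros E Ht H1 H2. unfold hahn_D. destruct (Req_EM_T t (omega0 q w)).
  - apply derive_within_ext; auto.
  - unfold hahn_quot. rewrite (E _ H1), (E _ H2). reflexivity.
Qed.

Lemma qw_props q w (I : R -> Prop) a b t : 0 < q < 1 -> is_interval I -> I (omega0 q w) ->
  I a -> I b -> qw_set q w a b t -> I t /\ I (sigma q w t) /\ I (sigma_inv q w t).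
Proof.
  intros Hq HI H0 Ha Hb H.
  assert (Hp : forall x, I x -> qw_point_set q w x t -> I t /\ I (sigma q w t) /\ I (sigma_inv q w t)).
  { intros x Hx [[n ->] | ->].
    - split; [apply iter_I; auto|]. split.
      + rewrite <- iter_S. apply iter_I; auto.
      + replace (2 * n + 1)%nat with (S (2 * n)) by lia. rewrite iter_S, inv_sig by lra.
        apply iter_I; auto.
    - rewrite sig_om0, siginv_om0 by lra. auto. }
  destruct H as [H|H]; [apply (Hp a)|apply (Hp b)]; auto.
Qed.

Lemma nbhd q w (I : R -> Prop) : 0 < q < 1 -> is_interval I -> I (omega0 q w) ->
  exists del, 0 < del /\ forall t, Rabs (t - omega0 q w) < del -> I t -> I (sigma_inv q w t).
Proof.
  intros Hq HI H0. set (o := omega0 q w).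
  assert (Hside : forall s : R, s = 1 \/ s = -1 -> exists dd, 0 < dd /\
     forall t, 0 < s * (t - o) < dd -> I t -> I (sigma_inv q w t)).
  { intros s Hs.
    destruct (classic (exists p, I p /\ 0 < s * (p - o))) as [[p [Hp Hps]]|Hn].
    - exists (q * (s * (p - o))). split; [nra|]. intros t Ht HIt.
      pose proof (siginv_om q w t Hq) as E. fold o in E.
      apply (between I o p); auto.
      assert (s * (sigma_inv q w t - o) = s * (t - o) / q) by (rewrite E; field; lra).
      assert (0 < s * (t - o) / q < s * (p - o)).
      { split. apply Rdiv_lt_0_compat; lra.
        apply (Rmult_lt_reg_l q); [lra|]. replace (q * (s * (t - o) / q)) with (s * (t - o)) by (field; lra). lra. }
      destruct Hs as [->| ->]; [left|right]; lra.
    - exists 1. split; [lra|]. intros t Ht HIt. exfalso. apply Hn. exists t. split; auto; lra. }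
  destruct (Hside 1 (or_introl eq_refl)) as [d1 [Hd1 P1]].
  destruct (Hside (-1) (or_intror eq_refl)) as [d2 [Hd2 P2]].
  exists (Rmin d1 d2). split. apply Rmin_pos; auto.
  intros t Ht HIt. pose proof (Rmin_l d1 d2). pose proof (Rmin_r d1 d2).
  destruct (Rtotal_order t o) as [Hlt|[Heq|Hgt]].
  - apply P2; auto. rewrite Rabs_left in Ht by lra. lra.
  - subst t. unfold o. rewrite siginv_om0 by lra. auto.
  - apply P1; auto. rewrite Rabs_right in Ht by lra. lra.
Qed.

Lemma Y1_ext q w (I : R -> Prop) a b f g : 0 < q < 1 -> is_interval I -> I (omega0 q w) ->
  I a -> I b -> (forall t, I t -> f t = g t) -> Y1 q w I a b f -> Y1 q w I a b g.
Proof.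
  intros Hq HI H0 Ha Hb E [[d Hd] [[M1 HM1] [[M2 HM2] [Hc1 Hc2]]]].
  split; [exists d; apply (deriv_ext I f); auto|].
  split; [exists M1; intros t Ht; destruct (qw_props q w I a b t Hq HI H0 Ha Hb Ht) as [It _];
          rewrite <- (E t It); auto|].
  split; [exists M2; intros t Ht; destruct (qw_props q w I a b t Hq HI H0 Ha Hb Ht) as [It [I1 I2]];
          rewrite <- (hahnD_ext q w I f g t E It I1 I2); auto|].
  split.
  - unfold cont_within in *. rewrite <- (E _ H0).
    apply (filterlim_within_ext I f); auto.
  - unfold cont_within in *.
    rewrite <- (hahnD_ext q w I f g _ E H0) by (rewrite ?sig_om0, ?siginv_om0 by lra; auto).
    apply (filterlim_ext_loc (hahn_D q w I f)); auto.
    destruct (nbhd q w I Hq HI H0) as [del [Hdel P]].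
    exists (mkposreal del Hdel). intros t Ht HIt.
    change (Rabs (t - omega0 q w) < del) in Ht.
    apply hahnD_ext; auto.
    change (sigma q w t) with (sigma_iter q w 1 t). apply iter_I; auto.
Qed.

Theorem lemma3p13
  (q w : R) (I : R -> Prop) (a b alpha beta : R)
  (L Lbar : R -> R -> R -> R) (z zbar : R -> R -> R) (G : R -> R -> R)
  (Hq : 0 < q < 1) (Hw : 0 <= w)
  (HI : is_interval I) (HI0 : I (omega0 q w)) (Ha : I a) (Hb : I b) (Hab : a < b)
  (HL : lagrangian_hyp q w I a b L
          (fun y => Y1 q w I a b y /\ y a = alpha /\ y b = beta))
  (HLbar : lagrangian_hyp q w I a b Lbar
          (fun yb => Y1 q w I a b yb /\ yb a = zbar a alpha /\ yb b = zbar b beta))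
  (Hinv : forall t, qw_set q w a b t ->
          forall u, zbar t (z t u) = u /\ z t (zbar t u) = u)
  (Hcorr_to : forall yb, (Y1 q w I a b yb /\ yb a = zbar a alpha /\ yb b = zbar b beta) ->
          exists y, (Y1 q w I a b y /\ y a = alpha /\ y b = beta) /\
                    forall t, I t -> y t = z t (yb t))
  (Hcorr_from : forall y, (Y1 q w I a b y /\ y a = alpha /\ y b = beta) ->
          exists yb, (Y1 q w I a b yb /\ yb a = zbar a alpha /\ yb b = zbar b beta) /\
                     forall t, I t -> y t = z t (yb t))
  (Hcorr_inj : forall y yb1 yb2,
          (Y1 q w I a b yb1 /\ yb1 a = zbar a alpha /\ yb1 b = zbar b beta) ->
          (Y1 q w I a b yb2 /\ yb2 a = zbar a alpha /\ yb2 b = zbar b beta) ->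
          (forall t, I t -> y t = z t (yb1 t)) ->
          (forall t, I t -> y t = z t (yb2 t)) ->
          forall t, I t -> yb1 t = yb2 t)
  (HG : forall y yb,
          (Y1 q w I a b y /\ y a = alpha /\ y b = beta) ->
          (Y1 q w I a b yb /\ yb a = zbar a alpha /\ yb b = zbar b beta) ->
          (forall t, I t -> y t = z t (yb t)) ->
          forall t, qw_set q w a b t ->
            hahn_D_is q w I (fun tau => G tau (yb tau)) t
              (lag_comp q w I L y t - lag_comp q w I Lbar yb t)) :
  forall ybs : R -> R,
    (Y1 q w I a b ybs /\ ybs a = zbar a alpha /\ ybs b = zbar b beta) ->
    let ys := fun t => z t (ybs t) in
    ((forall yb, (Y1 q w I a b yb /\ yb a = zbar a alpha /\ yb b = zbar b beta) ->
        functional q w I Lbar a b yb <= functional q w I Lbar a b ybs) ->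
     (Y1 q w I a b ys /\ ys a = alpha /\ ys b = beta) /\
     forall y, (Y1 q w I a b y /\ y a = alpha /\ y b = beta) ->
        functional q w I L a b y <= functional q w I L a b ys)
    /\
    ((forall yb, (Y1 q w I a b yb /\ yb a = zbar a alpha /\ yb b = zbar b beta) ->
        functional q w I Lbar a b ybs <= functional q w I Lbar a b yb) ->
     (Y1 q w I a b ys /\ ys a = alpha /\ ys b = beta) /\
     forall y, (Y1 q w I a b y /\ y a = alpha /\ y b = beta) ->
        functional q w I L a b ys <= functional q w I L a b y).
Proof.
  intros ybs Hybs ys.
  set (C := G b (zbar b beta) - G a (zbar a alpha)).
  assert (KF : forall y yb,
    (Y1 q w I a b y /\ y a = alpha /\ y b = beta) ->
    (Y1 q w I a b yb /\ yb a = zbar a alpha /\ yb b = zbar b beta) ->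
    (forall t, I t -> y t = z t (yb t)) ->
    functional q w I L a b y = functional q w I Lbar a b yb + C).
  { intros y yb Hy Hyb Eyb.
    pose proof (HG y yb Hy Hyb Eyb) as H.
    destruct (proj2 HL y Hy) as [Hc1 _].
    destruct (proj2 HLbar yb Hyb) as [Hc2 _].
    assert (Hom : qw_set q w a b (omega0 q w)) by (left; right; reflexivity).
    destruct (H _ Hom) as [_ Hd]. specialize (Hd eq_refl).
    pose proof (key q w I (fun tau => G tau (yb tau)) (lag_comp q w I L y) (lag_comp q w I Lbar yb) b _
      Hq HI HI0 Hb Hc1 Hc2 Hd ltac:(intros n; apply H; right; left; exists n; reflexivity)) as Kb.
    pose proof (key q w I (fun tau => G tau (yb tau)) (lag_comp q w I L y) (lag_comp q w I Lbar yb) a _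
      Hq HI HI0 Ha Hc1 Hc2 Hd ltac:(intros n; apply H; left; left; exists n; reflexivity)) as Ka.
    cbv beta in Ka, Kb.
    unfold functional, hahn_int, C.
    destruct Hyb as [_ [Ea Eb]]. rewrite <- Ea, <- Eb. lra. }
  destruct (Hcorr_to ybs Hybs) as [y0 [Hy0 E0]].
  assert (Hys : Y1 q w I a b ys /\ ys a = alpha /\ ys b = beta).
  { destruct Hy0 as [Y [Ea Eb]]. split; [|split].
    - apply (Y1_ext q w I a b y0); auto.
    - unfold ys. rewrite <- (E0 a Ha). auto.
    - unfold ys. rewrite <- (E0 b Hb). auto. }
  pose proof (KF ys ybs Hys Hybs (fun t _ => eq_refl)) as Ks.
  split; intros Hopt; split; auto; intros y Hy;
    destruct (Hcorr_from y Hy) as [yb [Hyb Eyb]];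
    pose proof (KF y yb Hy Hyb Eyb) as Ky; specialize (Hopt yb Hyb); lra.
Qed.
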